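(* For every integer $n\ge 3$ there exist a boolean classifier $\kappa:\{0,1\}^n\to\{0,1\}$ and a point $\mathbf v\in\{0,1\}^n$ such that, for the explanation problem with sample $(\mathbf v,\kappa(\mathbf v))$, some feature $i\in\mathcal F=\{1,\dots,n\}$ is irrelevant and $\mathrm{Sv}(i)\neq 0$ (issue I1).
   Context: Let $\mathcal F=\{1,\dots,n\}$. A boolean classifier is a non-constant function $\kappa:\{0,1\}^n\to\{0,1\}$; a sample is a pair $(\mathbf v,c)$ with $\mathbf v\in\{0,1\}^n$ and $c=\kappa(\mathbf v)$. For $\mathcal S\subseteq\mathcal F$ let $\Upsilon(\mathcal S;\mathbf v)=\{\mathbf x\in\{0,1\}^n : x_j=v_j \text{ for all } j\in\mathcal S\}$ and, for any function $g$ on $\{0,1\}^n$, $\mathbf E[g\mid \mathbf x_{\mathcal S}=\mathbf v_{\mathcal S}]=|\Upsilon(\mathcal S;\mathbf v)|^{-1}\sum_{\mathbf x\in\Upsilon(\mathcal S;\mathbf v)}g(\mathbf x)$ (uniform distribution, independent features). The characteristic function is $\upsilon(\mathcal S)=\mathbf E[\kappa\mid\mathbf x_{\mathcal S}=\mathbf v_{\mathcal S}]$, and the SHAP score of feature $i$ is $\mathrm{Sv}(i)=\sum_{\mathcal S\subseteq\mathcal F\setminus\{i\}}\frac{|\mathcal S|!\,(n-|\mathcal S|-1)!}{n!}\big(\upsilon(\mathcal S\cup\{i\})-\upsilon(\mathcal S)\big)$. The similarity predicate is $\sigma(\mathbf x)=1$ if $\kappa(\mathbf x)=\kappa(\mathbf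 v)$ and $0$ otherwise. A set $\mathcal S\subseteq\mathcal F$ is a weak abductive explanation (WAXp) if $\mathbf E[\sigma\mid\mathbf x_{\mathcal S}=\mathbf v_{\mathcal S}]=1$ (i.e. $\kappa(\mathbf x)=\kappa(\mathbf v)$ for all $\mathbf x\in\Upsilon(\mathcal S;\mathbf v)$); an abductive explanation (AXp) is a WAXp $\mathcal S$ such that $\mathcal S\setminus\{t\}$ is not a WAXp for every $t\in\mathcal S$. A feature is relevant if it belongs to at least one AXp, and irrelevant otherwise. *)

(* Defs.v *)
(* Features F = {1..n} are represented by 'I_n (0-indexed),
   points of {0,1}^n by finite functions {ffun 'I_n -> bool},
   numeric values (expectations, SHAP scores) live in rat. *)
From mathcomp Require Import all_boot all_order all_algebra.
Set Implicit Arguments. Unset Strict Implicit. Unset Printing Implicit Defensive.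
Import Order.TTheory GRing.Theory Num.Theory.
Local Open Scope ring_scope.

Definition point (n : nat) := {ffun 'I_n -> bool}.

Definition non_constant n (kappa : point n -> bool) : Prop :=
  exists x y : point n, kappa x != kappa y.

Definition Upsilon n (S : {set 'I_n}) (v : point n) : {set point n} :=
  [set x : point n | [forall j in S, x j == v j]].

Definition cond_exp n (g : point n -> rat) (S : {set 'I_n}) (v : point n) : rat :=
  (#|Upsilon S v|%:R)^-1 * \sum_(x in Upsilon S v) g x.

Definition charfn n (kappa : point n -> bool) (v : point n) (S : {set 'I_n}) : rat :=
  cond_exp (fun x => (kappa x)%:R) S v.

Definition Sv n (kappa : point n -> bool) (v : point n) (i : 'I_n) : rat :=
  \sum_(S : {set 'I_n} | i \notin S)
     ((#|S|`! * (n - #|S| - 1)`!)%:R / (n`!)%:R) *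
     (charfn kappa v (i |: S) - charfn kappa v S).

Definition sigma n (kappa : point n -> bool) (v : point n) (x : point n) : rat :=
  (kappa x == kappa v)%:R.

Definition WAXp n (kappa : point n -> bool) (v : point n) (S : {set 'I_n}) : Prop :=
  cond_exp (sigma kappa v) S v = 1.

Definition AXp n (kappa : point n -> bool) (v : point n) (S : {set 'I_n}) : Prop :=
  WAXp kappa v S /\ (forall t, t \in S -> ~ WAXp kappa v (S :\ t)).

Definition relevant n (kappa : point n -> bool) (v : point n) (i : 'I_n) : Prop :=
  exists S : {set 'I_n}, AXp kappa v S /\ i \in S.

Definition irrelevant n (kappa : point n -> bool) (v : point n) (i : 'I_n) : Prop :=
  ~ relevant kappa v i.

(* Main.v *)
Require Import Defs.
From mathcomp Require Import all_boot all_order all_algebra.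
Import Order.TTheory GRing.Theory Num.Theory.
Local Open Scope ring_scope.

Lemma vU n (S : {set 'I_n}) v : v \in Upsilon S v.
Proof. by rewrite inE; apply/forall_inP. Qed.

Lemma sum_bool n (U : {set point n}) (b : point n -> bool) :
  \sum_(x in U) ((b x)%:R : rat) = #|[set x in U | b x]|%:R.
Proof.
rewrite -sum1_card natr_sum big_mkcond [RHS]big_mkcond /=.
by apply: eq_bigr => x _; rewrite !inE; case: (x \in U); case: (b x).
Qed.

Lemma waxp_all n (kappa : point n -> bool) v S :
  WAXp kappa v S -> forall x, x \in Upsilon S v -> kappa x = kappa v.
Proof.
rewrite /WAXp /cond_exp /sigma sum_bool => H.
set U := Upsilon S v in H *.
have cU : (0 < #|U|)%N by apply/card_gt0P; exists v; apply: vU.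
have Hc : (#|[set x in U | kappa x == kappa v]| = #|U|)%N.
  apply/eqP; rewrite -(eqr_nat rat); apply/eqP.
  have h0 : (#|U|%:R : rat) != 0 by rewrite pnatr_eq0 -lt0n.
  set s := (#|_|%:R : rat) in H *.
  by apply: (mulfI (invr_neq0 h0)); rewrite H mulVf.
have : [set x in U | kappa x == kappa v] == U.
  rewrite eqEcard Hc leqnn andbT; apply/subsetP => x; rewrite inE; by case/andP.
move=> /eqP E x xU; move: xU; rewrite -E inE => /andP[_ /eqP]; done.
Qed.

Lemma all_waxp n (kappa : point n -> bool) v S :
  (forall x, x \in Upsilon S v -> kappa x = kappa v) -> WAXp kappa v S.
Proof.
move=> H; rewrite /WAXp /cond_exp /sigma sum_bool.
set U := Upsilon S v.
have cU : (0 < #|U|)%N by apply/card_gt0P; exists v; apply: vU.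
have h0 : (#|U|%:R : rat) != 0 by rewrite pnatr_eq0 -lt0n.
have -> : [set x in U | kappa x == kappa v] = U.
  apply/setP => x; rewrite inE; case xU: (x \in U) => //=; by rewrite H ?eqxx.
by rewrite mulVf.
Qed.

Lemma U_sub n (S T : {set 'I_n}) v : S \subset T -> Upsilon T v \subset Upsilon S v.
Proof.
move=> /subsetP ST; apply/subsetP => x; rewrite !inE => /forallP H.
apply/forallP => j; apply/implyP => /ST jT; exact: (implyP (H j) jT).
Qed.

Local Close Scope ring_scope.
Theorem proposition1 : forall n : nat, 3 <= n ->
  exists (kappa : point n -> bool) (v : point n),
    non_constant kappa /\
    exists i : 'I_n, irrelevant kappa v i /\ Sv kappa v i <> 0%R.
Proof.
move=> n Hn.
have h0 : (0 < n)%N by apply: leq_trans Hn.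
have h1 : (1 < n)%N by apply: leq_trans Hn.
pose i0 := Ordinal h0. pose i1 := Ordinal h1.
have i01 : i0 != i1 by [].
pose kappa := fun x : point n => x i0 && x i1.
pose v : point n := [ffun j => j != i1].
have kv : kappa v = false by rewrite /kappa !ffunE eqxx andbF.
have vi0 : v i0 = true by rewrite ffunE.
exists kappa, v; split.
  exists v, [ffun=> true]; by rewrite kv /kappa !ffunE.
exists i0; split.
  move=> [S [[W Hmin] iS]]; apply: (Hmin i0 iS); apply: (@all_waxp _ _ _ _) => x xU.
  pose x' : point n := [ffun j => if j == i0 then true else x j].
  have x'U : x' \in Upsilon S v.
    rewrite inE; apply/forall_inP => j jS; rewrite ffunE.
    case: (eqVneq j i0) => [->|ji0]; first by rewrite vi0.
    move: xU; rewrite inE => /forallP /(_ j) /implyP; apply; by rewrite !inE ji0.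
  have := @waxp_all _ _ _ _ W _ x'U; rewrite kv /kappa !ffunE eqxx /=.
  by move=> ->; rewrite andbF.
have inT : forall S x, x \in Upsilon (i0 |: S) v = (x i0 && (x \in Upsilon S v)).
  move=> S x; apply/idP/idP.
    move=> xT; have /subsetP := @U_sub _ _ _ v (subsetUr [set i0] S); move/(_ x xT) ->.
    move: xT; rewrite inE => /forallP /(_ i0) /implyP.
    by rewrite !inE eqxx /= vi0 => /(_ isT) /eqP ->.
  case/andP => x0; rewrite !inE => /forallP H; apply/forallP => j; apply/implyP.
  rewrite !inE => /orP[/eqP ->|jS]; first by rewrite x0 vi0.
  exact: (implyP (H j) jS).
pose A S := (\sum_(x in Upsilon S v) ((kappa x)%:R : rat))%R.
have key : forall S, A S = A (i0 |: S).
  move=> S; rewrite /A (big_setID (Upsilon (i0 |: S) v)) /=.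
  rewrite (setIidPr (@U_sub _ _ _ v (subsetUr [set i0] S))).
  rewrite [X in (_ + X)%R]big1 ?addr0 //.
  move=> x /setDP [xS nT]; case x0: (x i0); last by rewrite /kappa x0.
  by move: nT; rewrite inT x0 xS.
have cpos : forall S, ((#|Upsilon S v|%:R : rat) \is Num.pos)%R.
  move=> S; rewrite qualifE /= ltr0n; apply/card_gt0P; exists v; apply: vU.
have Ape : forall S, (0 <= A S)%R by move=> S; apply: sumr_ge0 => x _; apply: ler0n.
have dpos : forall S, (0 <= charfn kappa v (i0 |: S) - charfn kappa v S)%R.
  move=> S; rewrite /charfn /cond_exp -/(A _) -/(A _) -key subr_ge0.
  rewrite ![(_^-1 * A S)%R]mulrC; apply: ler_wpM2l => //.
  rewrite lef_pV2 // ler_nat; apply: subset_leq_card; apply: U_sub; exact: subsetUr.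
have wpos : forall k, (0 <= ((k`! * (n - k - 1)`!)%:R / (n`!)%:R : rat))%R.
  by move=> k; apply: divr_ge0; apply: ler0n.
have Tpos : (0 < ((#|(set0 : {set 'I_n})|`! * (n - #|(set0 : {set 'I_n})| - 1)`!)%:R / (n`!)%:R : rat) *
     (charfn kappa v (i0 |: set0) - charfn kappa v set0))%R.
  apply: mulr_gt0.
    by apply: divr_gt0; rewrite ?ltr0n ?muln_gt0 ?fact_gt0.
  rewrite /charfn /cond_exp -/(A _) -/(A _) -key subr_gt0.
  have Ap : (0 < A (i0 |: set0))%R.
    rewrite /A sum_bool ltr0n; apply/card_gt0P; exists [ffun=> true].
    rewrite inE inT /kappa !ffunE /= andbT; rewrite inE; apply/forallP => j; by rewrite inE.
  rewrite -key in Ap.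
  rewrite ![(_^-1 * A set0)%R]mulrC ltr_pM2l // ltf_pV2 // ltr_nat.
  apply: proper_card; rewrite properE U_sub ?subsetUr //=.
  apply/subsetPn; exists [ffun=> false].
    by rewrite inE; apply/forallP => j; rewrite inE.
  by rewrite inT ffunE.
have Svpos : (0 < Sv kappa v i0)%R.
  rewrite /Sv (bigD1 set0) ?in_set0 //=.
  apply: (lt_le_trans Tpos); rewrite lerDl.
  apply: sumr_ge0 => S /andP [iS _]; apply: mulr_ge0; [exact: wpos | ].
  exact: dpos.
by move=> H; move: Svpos; rewrite H ltxx.
Qed.
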